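(* Let $q\ge2$, let $\mathcal{D}$ be a $2k$-wise uniform distribution over $(\mathbb{Z}/q\mathbb{Z})^n$, and let $\eta\in[0,1]$. Then for every length-$n$ width-$w$ standard-order read-once branching program $f:(\mathbb{Z}/q\mathbb{Z})^n\to\{0,1\}$, $$\left|\mathbb{E}_{x\sim\mathcal{D}}(T_\eta f)(x)-\mathbb{E}_{x\gets(\mathbb{Z}/q\mathbb{Z})^n}f(x)\right|\le nw(1-\eta)^k,$$ where the second expectation is over uniform $x$. Equivalently, if $x\sim\mathcal{D}$ and $y\gets\mathrm{SC}_\eta(x)$, then $y$ is $nw(1-\eta)^k$-pseudorandom to every such $f$.
   Context: A distribution on $(\mathbb{Z}/q\mathbb{Z})^n$ is $t$-wise uniform if its marginal on any $t$ coordinates is uniform. $\mathrm{SC}_\eta(x)$ independently keeps each coordinate of $x$ with probability $1-\eta$ and replaces it with a uniform element of $\mathbb{Z}/q\mathbb{Z}$ with probability $\eta$; the noise operator is $(T_\eta f)(x)=\mathbb{E}[f(\mathrm{SC}_\eta(x))]$. A length-$n$ width-$w$ standard-order read-once branching program consists of layers $V_0,\dots,V_n$ each with at most $w$ vertices, a start vertex in $V_0$, a set of accepting vertices in $V_n$, and for each vertex of $V_{i-1}$ and each symbol $a\in\mathbb{Z}/q\mathbb{Z}$ an edge labeled $a$ to a vertex of $V_i$; on input $x$ one follows from the start the edges labeled $x_1,\dots,x_n$, and $f(x)=1$ iff the final vertex is accepting. *)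

(* Defs.v *)
From mathcomp Require Import all_boot all_order all_algebra.
Set Implicit Arguments. Unset Strict Implicit. Unset Printing Implicit Defensive.
Import Order.TTheory GRing.Theory Num.Theory.
Local Open Scope ring_scope.

(* Symbols of Z/qZ are represented by 'I_q = {0,...,q-1}; inputs are words
   x : 'I_n -> 'I_q. *)
Definition word (n q : nat) := {ffun 'I_n -> 'I_q}.

Definition is_distribution (R : numDomainType) (n q : nat) (D : word n q -> R) :=
  (forall x, 0 <= D x) /\ \sum_(x : word n q) D x = 1.

Definition twise_uniform (R : numFieldType) (n q t : nat) (D : word n q -> R) :=
  forall (S : {set 'I_n}) (a : word n q), (#|S| <= t)%N ->
    \sum_(x : word n q | [forall i in S, x i == a i]) D x = (q%:R ^+ #|S|)^-1.

Definition sc_prob (R : numFieldType) (n q : nat) (eta : R) (x y : word n q) : R :=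
  \prod_(i < n) ((1 - eta) * (y i == x i)%:R + eta / q%:R).

Definition noise_op (R : numFieldType) (n q : nat) (eta : R) (f : word n q -> R)
  (x : word n q) : R :=
  \sum_(y : word n q) sc_prob eta x y * f y.

(* Every layer V_0..V_n is (embedded into) 'I_w;
   trans i v a is the endpoint in V_(i+1) of the edge labelled a leaving
   vertex v of V_i. *)
Record ROBP (n w q : nat) := MkROBP {
  robp_start : 'I_w;
  robp_trans : 'I_n -> 'I_w -> 'I_q -> 'I_w;
  robp_accept : {set 'I_w} }.

Definition robp_final (n w q : nat) (B : ROBP n w q) (x : word n q) : 'I_w :=
  foldl (fun v i => robp_trans B i v (x i)) (robp_start B) (enum 'I_n).

Definition robp_fun (R : numDomainType) (n w q : nat) (B : ROBP n w q)
  (x : word n q) : R := (robp_final B x \in robp_accept B)%:R.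

(* Main.v *)
Require Import Defs.
From mathcomp Require Import all_boot all_order all_algebra.
From mathcomp Require Import ring lra.
Import Order.TTheory GRing.Theory Num.Theory.
Local Open Scope ring_scope.
Set Implicit Arguments. Unset Strict Implicit. Unset Printing Implicit Defensive.

Lemma sum_ind1 (R : numDomainType) (T : finType) (t : T) (F : T -> R) :
  \sum_u (t == u)%:R * F u = F t.
Proof.
rewrite (bigD1 t) //= eqxx mul1r big1 ?addr0 // => u.
by rewrite eq_sym => /negbTE ->; rewrite mul0r.
Qed.

Lemma sum_ind1' (R : numDomainType) (T : finType) (t : T) :
  \sum_u (t == u)%:R = 1 :> R.
Proof.
transitivity (\sum_u (t == u)%:R * (1:R)); first by apply: eq_bigr => u _; rewrite mulr1.
exact: sum_ind1.
Qed.

Section Main.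
Variables (R : realFieldType) (n q w : nat) (B : ROBP n w q).
Hypothesis q_gt0 : (0 < q)%N.
Local Notation word := (word n q).

Definition sw (b b0 a : 'I_q) := if a == b then b0 else if a == b0 then b else a.
Lemma swK b b0 : involutive (sw b b0).
Proof.
move=> a; rewrite /sw; case: (eqVneq a b) => [->|hab].
  rewrite eqxx; case: (eqVneq b0 b) => [->|]//.
case: (eqVneq a b0) => [->|hab0]; first by rewrite eqxx.
by rewrite (negbTE hab) (negbTE hab0).
Qed.

Definition mu (c : 'I_n -> 'I_q -> R) (y : word) := \prod_i c i (y i).
Definition Emu c (g : word -> R) := \sum_(y : word) mu c y * g y.
Definition nodep (i : 'I_n) (F : word -> R) :=
  forall y y' : word, (forall l, l != i -> y l = y' l) -> F y = F y'.

Lemma sum_indep (i : 'I_n) (b0 : 'I_q) (A : word -> R) (K : 'I_q -> R) :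
  nodep i A ->
  \sum_(y : word) A y * K (y i) = (\sum_(y : word | y i == b0) A y) * \sum_b K b.
Proof.
move=> hA.
rewrite (partition_big (fun y : word => y i) predT) //= mulr_sumr.
apply: eq_bigr => b _.
have -> : \sum_(y : word | true && (y i == b)) A y * K (y i) = (\sum_(y : word | y i == b) A y) * K b.
  by rewrite mulr_suml; apply: eq_bigr => y /eqP ->.
congr (_ * _).
pose s (y : word) : word := [ffun l => if l == i then sw b b0 (y l) else y l].
have sK : involutive s.
  move=> y; apply/ffunP => l; rewrite !ffunE; case: (l == i) => //.
  by rewrite swK.
rewrite (reindex_inj (inv_inj sK)) /=.
apply: eq_big => y.
  rewrite /s ffunE eqxx (canF_eq (swK b b0)) /sw eqxx.
  by case: (eqVneq b0 b) => [->|].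
move=> _; apply: hA => l hl; rewrite /s ffunE (negbTE hl) //.
Qed.

Lemma Emu_indep c (i : 'I_n) (b0 : 'I_q) (F : word -> R) (G : 'I_q -> R) :
  \sum_b c i b = 1 -> nodep i F ->
  Emu c (fun y => F y * G (y i)) = Emu c F * \sum_b c i b * G b.
Proof.
move=> hc hF.
pose A (y : word) := (\prod_(l | l != i) c l (y l)) * F y.
have hA : nodep i A.
  move=> y y' h; rewrite /A (hF y y' h); congr (_ * _).
  by apply: eq_bigr => l hl; rewrite h.
have e1 : Emu c (fun y => F y * G (y i)) = \sum_(y : word) A y * (c i (y i) * G (y i)).
  apply: eq_bigr => y _; rewrite /mu (bigD1 i) //= /A; ring.
have e2 : Emu c F = \sum_(y : word) A y * c i (y i).
  apply: eq_bigr => y _; rewrite /mu (bigD1 i) //= /A; ring.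
rewrite e1 e2 (sum_indep b0 (fun b => c i b * G b) hA) (sum_indep b0 (c i) hA) hc.
by rewrite mulr1.
Qed.

Lemma Emu_const c (a : R) : (forall i, \sum_b c i b = 1) -> Emu c (fun _ => a) = a.
Proof.
move=> hc; rewrite /Emu -mulr_suml.
have -> : \sum_(y : word) mu c y = \prod_(i < n) \sum_(b < q) c i b.
  by rewrite bigA_distr_bigA.
by rewrite big1 ?mul1r // => i _; rewrite hc.
Qed.

Lemma Emu_ext c (g h : word -> R) : (forall y, g y = h y) -> Emu c g = Emu c h.
Proof. by move=> e; apply: eq_bigr => y _; rewrite e. Qed.

Lemma Emu_sum c (I : finType) (F : I -> word -> R) :
  Emu c (fun y => \sum_j F j y) = \sum_j Emu c (F j).
Proof.
rewrite /Emu exchange_big /=; apply: eq_bigr => y _; by rewrite mulr_sumr.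
Qed.

Lemma Emu_add c (g h : word -> R) : Emu c (fun y => g y + h y) = Emu c g + Emu c h.
Proof. by rewrite /Emu -big_split; apply: eq_bigr => y _; rewrite mulrDr. Qed.

Lemma Emu_scale c (a : R) (g : word -> R) : Emu c (fun y => a * g y) = a * Emu c g.
Proof. by rewrite /Emu mulr_sumr; apply: eq_bigr => y _; ring. Qed.

Lemma Emu_le c (g h : word -> R) : (forall i b, 0 <= c i b) -> (forall y, g y <= h y) ->
  Emu c g <= Emu c h.
Proof.
move=> hc hgh; apply: ler_sum => y _; apply: ler_wpM2l; last exact: hgh.
by apply: prodr_ge0 => i _; apply: hc.
Qed.

Definition dep_on (S : {set 'I_n}) (g : word -> R) :=
  forall x y : word, (forall i, i \in S -> x i = y i) -> g x = g y.

Inductive lowdeg (t : nat) : (word -> R) -> Prop :=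
| LD_dep (S : {set 'I_n}) (g : word -> R) : (#|S| <= t)%N -> dep_on S g -> lowdeg t g
| LD_add (g h : word -> R) : lowdeg t g -> lowdeg t h -> lowdeg t (fun x => g x + h x)
| LD_ext (g h : word -> R) : lowdeg t g -> (forall x, g x = h x) -> lowdeg t h.

Lemma ld_mono t t' g : (t <= t')%N -> lowdeg t g -> lowdeg t' g.
Proof.
move=> htt; elim=> {g}.
- by move=> S g hS hd; apply: (LD_dep (S:=S)) => //; apply: leq_trans hS htt.
- by move=> g h _ ? _ ?; apply: LD_add.
- by move=> g h _ ? e; apply: LD_ext e.
Qed.

Lemma ld_const t (a : R) : lowdeg t (fun _ => a).
Proof. by apply: (LD_dep (S:=set0)); rewrite ?cards0. Qed.

Lemma ld_scale t (a : R) g : lowdeg t g -> lowdeg t (fun x => a * g x).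
Proof.
elim=> {g}.
- move=> S g hS hd; apply: (LD_dep (S:=S)) => // x y h; by rewrite (hd x y h).
- move=> g h _ h1 _ h2; apply: LD_ext (LD_add h1 h2) _ => x; ring.
- by move=> g h _ h1 e; apply: LD_ext h1 _ => x; rewrite e.
Qed.

Lemma ld_sumseq t (I : Type) (r : seq I) (P : pred I) (F : I -> word -> R) :
  (forall i, lowdeg t (F i)) -> lowdeg t (fun x => \sum_(i <- r | P i) F i x).
Proof.
move=> hF; elim: r => [|a r IH].
  by apply: LD_ext (ld_const t 0) _ => x; rewrite big_nil.
case hP: (P a).
  by apply: LD_ext (LD_add (hF a) IH) _ => x; rewrite big_cons hP.
by apply: LD_ext IH _ => x; rewrite big_cons hP.
Qed.

Lemma ld_mul a b g h : lowdeg a g -> lowdeg b h -> lowdeg (a + b) (fun x => g x * h x).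
Proof.
move=> hg; elim: hg h => {g}.
- move=> S g hS hdg h hh; elim: hh => {h}.
  + move=> S' h hS' hdh; apply: (LD_dep (S := S :|: S')).
      by rewrite cardsU; apply: leq_trans (leq_subr _ _) _; apply: leq_add.
    move=> x y hxy; rewrite (hdg x y) ?(hdh x y) // => i hi; apply: hxy;
      by rewrite inE hi ?orbT.
  + by move=> h1 h2 _ H1 _ H2; apply: LD_ext (LD_add H1 H2) _ => x; ring.
  + by move=> h1 h2 _ H1 e; apply: LD_ext H1 _ => x; rewrite e.
- move=> g1 g2 _ H1 _ H2 h hh.
  by apply: LD_ext (LD_add (H1 h hh) (H2 h hh)) _ => x; ring.
- by move=> g1 g2 _ H1 e h hh; apply: LD_ext (H1 h hh) _ => x; rewrite e.
Qed.

Lemma agr_prod (S : {set 'I_n}) (a x : word) :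
  ([forall i in S, a i == x i])%:R = \prod_(i < n) (if i \in S then (a i == x i)%:R else 1) :> R.
Proof.
case: (boolP [forall i in S, a i == x i]) => h.
  rewrite big1 // => i _; case: ifP => // iS.
  by move/forall_inP: h => /(_ i iS) ->.
move/forall_inPn: h => [i iS ne].
by rewrite (bigD1 i) //= iS (negbTE ne) mul0r.
Qed.

Lemma agr_cnt (S : {set 'I_n}) (x : word) :
  \sum_(a : word) ([forall i in S, a i == x i])%:R =
  \prod_(i < n) (if i \in S then 1 else q%:R) :> R.
Proof.
under eq_bigr => a _ do rewrite agr_prod.
rewrite -(bigA_distr_bigA (fun i b => if i \in S then (b == x i)%:R else 1 : R)).
apply: eq_bigr => i _; case: (i \in S).
  by under eq_bigr => b _ do rewrite eq_sym; rewrite sum_ind1'.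
by rewrite sumr_const card_ord.
Qed.

Lemma qR_neq0 : q%:R != 0 :> R.
Proof. by rewrite pnatr_eq0 -lt0n q_gt0. Qed.

Lemma sum_words1 : \sum_(a : word) (1 : R) = q%:R ^+ n.
Proof. by rewrite sumr_const card_ffun !card_ord natrX. Qed.

Lemma ld_E t (D : word -> R) g :
  twise_uniform t D -> is_distribution D -> lowdeg t g ->
  \sum_(x : word) D x * g x = (q%:R ^+ n)^-1 * \sum_(x : word) g x.
Proof.
move=> htw [_ hD1]; elim=> {g}.
- move=> S g hS hdg.
  pose cS := \prod_(i < n) (if i \in S then 1 else q%:R) : R.
  pose K := (q%:R ^+ #|S|)^-1 : R.
  have E : forall h : word -> R, dep_on S h ->
      (\sum_(x : word) D x * h x) * cS = K * \sum_(a : word) h a.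
    move=> h hd.
    rewrite mulr_suml.
    transitivity (\sum_(x : word) D x * \sum_(a : word) ([forall i in S, a i == x i])%:R * h a).
      apply: eq_bigr => x _; rewrite -mulrA; congr (_ * _).
      rewrite /cS -(agr_cnt S x) mulr_sumr; apply: eq_bigr => a _.
      case: (boolP [forall i in S, a i == x i]) => hax; last by rewrite !mulr0 mul0r.
      rewrite (hd a x) ?mulr1 ?mul1r // => i iS.
      by move/forall_inP: hax => /(_ i iS) /eqP.
    under eq_bigr => x _ do rewrite mulr_sumr.
    rewrite exchange_big /= mulr_sumr; apply: eq_bigr => a _.
    rewrite /K -(htw S a hS) [in RHS]big_mkcond [in RHS]mulr_suml /=; apply: eq_bigr => x _.
    have -> : [forall i in S, a i == x i] = [forall i in S, x i == a i].
      by apply: eq_forallb => i; rewrite eq_sym.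
    by case: ifP; rewrite ?mulr0 ?mul0r ?mulr1 ?mul1r //; move=> _; ring.
  have E1 : cS = K * q%:R ^+ n.
    have := E (fun _ => 1) (fun _ _ _ => erefl); rewrite /=.
    have -> : \sum_(x : word) D x * 1 = 1 by rewrite -[RHS]hD1; apply: eq_bigr => x _; rewrite mulr1.
    by rewrite mul1r sum_words1.
  have Kn0 : K != 0 by rewrite /K invr_eq0 expf_neq0 // qR_neq0.
  have Nn0 : q%:R ^+ n != 0 :> R by rewrite expf_neq0 // qR_neq0.
  have cSn0 : cS != 0 by rewrite E1 mulf_neq0.
  apply: (mulIf cSn0); rewrite /= (E g hdg) E1; field; exact: Nn0.
- move=> g h _ H1 _ H2.
  under eq_bigr => x _ do rewrite mulrDr.
  by rewrite big_split /= H1 H2 big_split /= mulrDr.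
- move=> g h _ H1 e.
  have e1 : \sum_(x : word) D x * h x = \sum_(x : word) D x * g x.
    by apply: eq_bigr => x _; rewrite e.
  have e2 : \sum_(x : word) h x = \sum_(x : word) g x by apply: eq_bigr => x _; rewrite e.
  by rewrite e1 e2.
Qed.

Definition cu : 'I_n -> 'I_q -> R := fun _ _ => q%:R^-1.

Lemma cu_sum i : \sum_b cu i b = 1.
Proof. by rewrite /cu sumr_const card_ord -[RHS](mulVf qR_neq0) mulr_natr. Qed.

Lemma cu_ge0 i b : 0 <= cu i b.
Proof. by rewrite /cu invr_ge0 ler0n. Qed.

Lemma EU_eq g : Emu cu g = (q%:R ^+ n)^-1 * \sum_(x : word) g x.
Proof.
rewrite /Emu mulr_sumr; apply: eq_bigr => y _; congr (_ * _).
by rewrite /mu /cu prodr_const card_ord exprVn.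
Qed.

Definition Mt (i : 'I_n) (a : 'I_q) (c u : 'I_w) : R := (robp_trans B i c a == u)%:R.
Definition Mbar (i : 'I_n) (c u : 'I_w) : R := q%:R^-1 * \sum_(a < q) Mt i a c u.
Definition Dl i a c u : R := Mt i a c u - Mbar i c u.
Definition acc (u : 'I_w) : R := (u \in robp_accept B)%:R.
Definition e0 (u : 'I_w) : R := (robp_start B == u)%:R.

Lemma Mt_sum i a c : \sum_u Mt i a c u = 1.
Proof. exact: sum_ind1'. Qed.
Lemma Mt_ge0 i a c u : 0 <= Mt i a c u.
Proof. by rewrite /Mt ler0n. Qed.
Lemma Mt_le1 i a c u : Mt i a c u <= 1.
Proof. by rewrite /Mt; case: (_ == _); rewrite ?ler01 ?lexx. Qed.
Lemma Mbar_ge0 i c u : 0 <= Mbar i c u.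
Proof. by rewrite /Mbar mulr_ge0 ?invr_ge0 ?ler0n // sumr_ge0 // => a _; apply: Mt_ge0. Qed.
Lemma Mbar_sum i c : \sum_u Mbar i c u = 1.
Proof.
rewrite /Mbar -mulr_sumr exchange_big /=.
under eq_bigr => a _ do rewrite Mt_sum.
by rewrite sumr_const card_ord -[RHS](mulVf qR_neq0) mulr_natr.
Qed.
Lemma Mbar_le1 i c u : Mbar i c u <= 1.
Proof.
rewrite -(Mbar_sum i c) (bigD1 u) //= lerDl sumr_ge0 // => v _; exact: Mbar_ge0.
Qed.
Lemma Dl_mean i c u : \sum_b cu i b * Dl i b c u = 0.
Proof.
rewrite /cu /Dl -mulr_sumr sumrB sumr_const card_ord /Mbar -mulr_natr.
by field; rewrite qR_neq0.
Qed.

Fixpoint SgenB (Mf : 'I_n -> 'I_w -> 'I_w -> R) (T : 'I_w -> R) (s : seq 'I_n) : 'I_w -> R :=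
  match s with
  | [::] => T
  | i :: s' => fun c => \sum_u Mf i c u * SgenB Mf T s' u
  end.

Lemma SgenB_ext Mf Mf' T s : (forall i c u, Mf i c u = Mf' i c u) ->
  forall c, SgenB Mf T s c = SgenB Mf' T s c.
Proof.
move=> e; elim: s => [|i s IH] c //=; apply: eq_bigr => u _; by rewrite e IH.
Qed.

Lemma SgenB_range Mf T s : (forall i c u, 0 <= Mf i c u) -> (forall i c, \sum_u Mf i c u = 1) ->
  (forall c, 0 <= T c <= 1) -> forall c, 0 <= SgenB Mf T s c <= 1.
Proof.
move=> h0 h1 hT; elim: s => [|i s IH] c //=.
apply/andP; split.
  by apply: sumr_ge0 => u _; apply: mulr_ge0 => //; case/andP: (IH u).
rewrite -(h1 i c); apply: ler_sum => u _.
by rewrite -{2}(mulr1 (Mf i c u)) ler_wpM2l //; case/andP: (IH u).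
Qed.

Lemma acc_range c : 0 <= acc c <= 1.
Proof. by rewrite /acc; case: (_ \in _); rewrite ?lexx ?ler01. Qed.

Definition Fl (s : seq 'I_n) (y : word) (v : 'I_w) : R :=
  (foldl (fun v i => robp_trans B i v (y i)) v s \in robp_accept B)%:R.

Lemma Fl_cons i s y v : Fl (i :: s) y v = \sum_u Mt i (y i) v u * Fl s y u.
Proof. by rewrite sum_ind1. Qed.

Lemma Fl_dep s (y y' : word) v : (forall l, l \in s -> y l = y' l) -> Fl s y v = Fl s y' v.
Proof.
elim: s v => [|i s IH] v h //.
rewrite /Fl /= h ?mem_head //; apply: IH => l hl; apply: h; by rewrite in_cons hl orbT.
Qed.

Lemma Emu_Fl c s v : uniq s -> (forall i, \sum_b c i b = 1) ->
  Emu c (fun y => Fl s y v) = SgenB (fun i c' u => \sum_b c i b * Mt i b c' u) acc s v.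
Proof.
move=> hu hc; elim: s hu v => [|i s IH] hu v.
  by rewrite /= (@Emu_ext c _ (fun _ => acc v)) ?(Emu_const _ hc).
move: hu => /= /andP [his hus].
rewrite (@Emu_ext c _ (fun y => \sum_u Fl s y u * Mt i (y i) v u)); last first.
  by move=> y; rewrite Fl_cons; apply: eq_bigr => u _; rewrite mulrC.
rewrite Emu_sum; apply: eq_bigr => u _.
rewrite (Emu_indep (Ordinal q_gt0) (fun b => Mt i b v u) (hc i)); last first.
  move=> y y' h; apply: Fl_dep => l hl; apply: h.
  by apply: contraNneq his => <-.
by rewrite IH // mulrC.
Qed.

Definition stepL i (a : 'I_q) (st : nat -> 'I_w -> R) : nat -> 'I_w -> R :=
  fun m u => \sum_c st m c * Mbar i c u + (if m is m'.+1 then \sum_c st m' c * Dl i a c u else 0).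
Definition st0 : nat -> 'I_w -> R := fun m u => (m == 0%N)%:R * e0 u.
Definition W (p : seq 'I_n) (x : word) : nat -> 'I_w -> R :=
  foldl (fun st i => stepL i (x i) st) st0 p.
Definition Wm1 p x m c := if m is m'.+1 then W p x m' c else 0.
Definition Pind p (x : word) u : R :=
  (foldl (fun v i => robp_trans B i v (x i)) (robp_start B) p == u)%:R.
Definition Wbar p := foldl (fun v i u => \sum_c v c * Mbar i c u) e0 p.

Lemma W_rcons p i x m u : W (rcons p i) x m u =
  \sum_c W p x m c * Mbar i c u + \sum_c Wm1 p x m c * Dl i (x i) c u.
Proof.
rewrite /W foldl_rcons /stepL -/(W p x); case: m => [|m] //=.
by rewrite [X in _ = _ + X]big1 ?addr0 // => c _; rewrite mul0r.
Qed.

Lemma W_dep p (x x' : word) : (forall l, l \in p -> x l = x' l) -> W p x = W p x'.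
Proof.
rewrite /W; elim: p st0 => [|i p IH] st h //=.
rewrite h ?mem_head // IH // => l hl; apply: h; by rewrite in_cons hl orbT.
Qed.

Lemma W_nodep p i m c : i \notin p -> nodep i (fun x => W p x m c).
Proof.
move=> hi y y' h; rewrite (@W_dep p y y') // => l hl; apply: h.
by apply: contraNneq hi => <-.
Qed.

Lemma Wm1_nodep p i m c : i \notin p -> nodep i (fun x => Wm1 p x m c).
Proof. by case: m => [|m] hi //; apply: W_nodep. Qed.

Lemma W0 p x u : W p x 0 u = Wbar p u.
Proof.
elim/last_ind: p u => [|p i IH] u; first by rewrite /W /= /st0 mul1r.
rewrite W_rcons /Wbar foldl_rcons -/(Wbar p) /= [X in _ + X]big1 ?addr0.
  by apply: eq_bigr => c _; rewrite IH.
by move=> c _; rewrite mul0r.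
Qed.

Lemma W_big p x m u : (size p < m)%N -> W p x m u = 0.
Proof.
elim/last_ind: p m u => [|p i IH] m u hm.
  by rewrite /W /= /st0; case: m hm => // m _; rewrite mul0r.
rewrite W_rcons size_rcons in hm *.
rewrite big1 ?add0r; last by move=> c _; rewrite IH ?mul0r // ltnW.
rewrite big1 // => c _; case: m hm => [|m] //= hm.
by rewrite IH ?mul0r.
Qed.

Lemma Pind_rcons p i x u : Pind (rcons p i) x u = \sum_c Pind p x c * Mt i (x i) c u.
Proof. by rewrite /Pind foldl_rcons sum_ind1. Qed.

Lemma W_sumP p x u N : (size p < N)%N -> \sum_(m < N) W p x m u = Pind p x u.
Proof.
elim/last_ind: p u N => [|p i IH] u N hN.
  case: N hN => // N _; rewrite big_ord_recl /= big1 ?addr0.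
    by rewrite /W /= /st0 mul1r.
  by move=> m _; rewrite /W /= /st0 mul0r.
rewrite size_rcons in hN.
case: N hN => // N hN.
under eq_bigr => m _ do rewrite W_rcons.
rewrite big_split /= exchange_big /=.
rewrite [X in _ + X]exchange_big /=.
transitivity (\sum_c Pind p x c * Mbar i c u + \sum_c Pind p x c * Dl i (x i) c u).
  congr (_ + _); apply: eq_bigr => c _.
    by rewrite -mulr_suml IH // ltnW.
  rewrite -mulr_suml big_ord_recl /= add0r; congr (_ * _).
  rewrite -(IH c N) //; apply: eq_bigr => m _; by rewrite lift0.
rewrite -big_split /= Pind_rcons; apply: eq_bigr => c _.
by rewrite -mulrDr /Dl addrC subrK.
Qed.

Lemma ld_W p m u : lowdeg m (fun x => W p x m u).
Proof.
elim/last_ind: p m u => [|p i IH] m u.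
  exact: ld_const.
apply: LD_ext; last by move=> x; rewrite W_rcons.
apply: LD_add.
  apply: ld_sumseq => c; apply: LD_ext (ld_scale (Mbar i c u) (IH m c)) _ => x; exact: mulrC.
apply: ld_sumseq => c; case: m => [|m] /=.
  by apply: LD_ext (ld_const 0 0) _ => x; rewrite mul0r.
rewrite -addn1; apply: ld_mul; first exact: IH.
apply: (LD_dep (S := [set i])); first by rewrite cards1.
by move=> x y h; rewrite h // inE.
Qed.

Lemma nodepM i (F G : word -> R) : nodep i F -> nodep i G -> nodep i (fun x => F x * G x).
Proof. by move=> hF hG y y' h; rewrite (hF y y' h) (hG y y' h). Qed.

Lemma Emu_single i (F : 'I_w -> word -> R) (A : 'I_q -> 'I_w -> 'I_w -> R) a :
  (forall c, nodep i (F c)) ->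
  Emu cu (fun x => \sum_c F c x * A (x i) c a) = \sum_c Emu cu (F c) * \sum_b cu i b * A b c a.
Proof.
move=> hF; rewrite Emu_sum; apply: eq_bigr => c _.
exact: (Emu_indep (Ordinal q_gt0) (fun b => A b c a) (cu_sum i) (hF c)).
Qed.

Lemma Emu_pair i (F1 F2 : 'I_w -> word -> R) (A1 A2 : 'I_q -> 'I_w -> 'I_w -> R) a b :
  (forall c, nodep i (F1 c)) -> (forall c, nodep i (F2 c)) ->
  Emu cu (fun x => (\sum_c F1 c x * A1 (x i) c a) * (\sum_d F2 d x * A2 (x i) d b)) =
  \sum_c \sum_d Emu cu (fun x => F1 c x * F2 d x) * \sum_b' cu i b' * (A1 b' c a * A2 b' d b).
Proof.
move=> h1 h2.
rewrite (@Emu_ext cu _ (fun x => \sum_c \sum_d (F1 c x * F2 d x) * (A1 (x i) c a * A2 (x i) d b))); last first.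
  move=> x; rewrite mulr_suml; apply: eq_bigr => c _; rewrite mulr_sumr.
  by apply: eq_bigr => d _; ring.
rewrite Emu_sum; apply: eq_bigr => c _; rewrite Emu_sum; apply: eq_bigr => d _.
exact: (Emu_indep (Ordinal q_gt0) (fun b' => A1 b' c a * A2 b' d b) (cu_sum i) (nodepM (h1 c) (h2 d))).
Qed.

Lemma Emu0 (g : word -> R) : (forall x, g x = 0) -> Emu cu g = 0.
Proof. by move=> h; rewrite (@Emu_ext cu _ (fun _ => 0)) // Emu_const //; apply: cu_sum. Qed.

Lemma W_mean0 p m u : uniq p -> (0 < m)%N -> Emu cu (fun x => W p x m u) = 0.
Proof.
elim/last_ind: p m u => [|p i IH] m u hu hm.
  by apply: Emu0 => x; rewrite /W /= /st0; case: m hm => // m _; rewrite mul0r.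
move: hu; rewrite rcons_uniq => /andP [hi hu].
rewrite (@Emu_ext cu _ (fun x => \sum_c W p x m c * (fun _ => Mbar i) (x i) c u +
   \sum_c Wm1 p x m c * Dl i (x i) c u)); last by move=> x; rewrite W_rcons.
rewrite Emu_add (@Emu_single i (fun c x => W p x m c) (fun _ => Mbar i) u); last by move=> c; apply: W_nodep.
rewrite (@Emu_single i (fun c x => Wm1 p x m c) (Dl i) u); last by move=> c; apply: Wm1_nodep.
rewrite big1 ?add0r; last by move=> c _; rewrite IH ?mul0r.
by rewrite big1 // => c _; rewrite Dl_mean mulr0.
Qed.

Lemma Dl_fac1 i (K : R) d b : \sum_b' cu i b' * (K * Dl i b' d b) = 0.
Proof.
transitivity (K * \sum_b' cu i b' * Dl i b' d b); last by rewrite Dl_mean mulr0.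
rewrite mulr_sumr; apply: eq_bigr => b' _; ring.
Qed.

Lemma Dl_fac2 i (K : R) d b : \sum_b' cu i b' * (Dl i b' d b * K) = 0.
Proof.
transitivity (K * \sum_b' cu i b' * Dl i b' d b); last by rewrite Dl_mean mulr0.
rewrite mulr_sumr; apply: eq_bigr => b' _; ring.
Qed.

Lemma W_orth p m m' a b : uniq p -> m != m' ->
  Emu cu (fun x => W p x m a * W p x m' b) = 0.
Proof.
elim/last_ind: p m m' a b => [|p i IH] m m' a b hu hm.
  apply: Emu0 => x; rewrite /W /= /st0.
  by case: m hm => [|m]; case: m' => [|m'] //= _; rewrite !mul0r ?mulr0.
move: hu; rewrite rcons_uniq => /andP [hi hu].
have n1 : forall m0 c, nodep i (fun x => W p x m0 c) by move=> m0 c; apply: W_nodep.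
have n2 : forall m0 c, nodep i (fun x => Wm1 p x m0 c) by move=> m0 c; apply: Wm1_nodep.
rewrite (@Emu_ext cu _ (fun x =>
   (\sum_c W p x m c * (fun _ => Mbar i) (x i) c a) * (\sum_d W p x m' d * (fun _ => Mbar i) (x i) d b) +
   (\sum_c W p x m c * (fun _ => Mbar i) (x i) c a) * (\sum_d Wm1 p x m' d * Dl i (x i) d b) +
   ((\sum_c Wm1 p x m c * Dl i (x i) c a) * (\sum_d W p x m' d * (fun _ => Mbar i) (x i) d b) +
   (\sum_c Wm1 p x m c * Dl i (x i) c a) * (\sum_d Wm1 p x m' d * Dl i (x i) d b)))); last first.
  by move=> x; rewrite !W_rcons /=; ring.
rewrite !Emu_add.
rewrite (@Emu_pair i (fun c x => W p x m c) (fun c x => W p x m' c) (fun _ => Mbar i) (fun _ => Mbar i) a b (n1 m) (n1 m')).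
rewrite (@Emu_pair i (fun c x => W p x m c) (fun c x => Wm1 p x m' c) (fun _ => Mbar i) (Dl i) a b (n1 m) (n2 m')).
rewrite (@Emu_pair i (fun c x => Wm1 p x m c) (fun c x => W p x m' c) (Dl i) (fun _ => Mbar i) a b (n2 m) (n1 m')).
rewrite (@Emu_pair i (fun c x => Wm1 p x m c) (fun c x => Wm1 p x m' c) (Dl i) (Dl i) a b (n2 m) (n2 m')).
rewrite big1 ?add0r; last by move=> c _; rewrite big1 // => d _; rewrite IH ?mul0r.
rewrite big1 ?add0r; last by move=> c _; rewrite big1 // => d _; rewrite Dl_fac1 mulr0.
rewrite big1 ?add0r; last by move=> c _; rewrite big1 // => d _; rewrite Dl_fac2 mulr0.
rewrite big1 // => c _; rewrite big1 // => d _.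
case: m hm => [|m]; case: m' => [|m'] //= hm.
- by rewrite Emu0 ?mul0r // => x /=; rewrite ?mul0r ?mulr0.
- by rewrite Emu0 ?mul0r // => x /=; rewrite ?mul0r ?mulr0.
- by rewrite IH ?mul0r.
Qed.

Lemma ld_Dl i c u : lowdeg 1 (fun x => Dl i (x i) c u).
Proof.
apply: (LD_dep (S := [set i])); first by rewrite cards1.
by move=> x y h; rewrite h // inE.
Qed.

Lemma E2 p i m u : uniq p -> i \notin p ->
  Emu cu (fun x => (\sum_c W p x m c * Dl i (x i) c u) ^+ 2) <= 1.
Proof.
move=> hu hi.
pose N := (size p + m).+1.
have hN : (size p < N)%N by rewrite /N ltnS leq_addr.
have hmN : (m < N)%N by rewrite /N ltnS leq_addl.
pose Z j x := \sum_c W p x j c * Dl i (x i) c u.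
have n1 : forall j c, nodep i (fun x => W p x j c) by move=> j c; apply: W_nodep.
have Eoff : forall j j', j != j' -> Emu cu (fun x => Z j x * Z j' x) = 0.
  move=> j j' hj; rewrite /Z (@Emu_pair i (fun c x => W p x j c) (fun c x => W p x j' c) (Dl i) (Dl i) u u (n1 j) (n1 j')).
  by rewrite big1 // => c _; rewrite big1 // => d _; rewrite W_orth ?mul0r.
have EY : Emu cu (fun x => (\sum_(j < N) Z j x) ^+ 2) = \sum_(j < N) Emu cu (fun x => Z j x ^+ 2).
  rewrite (@Emu_ext cu _ (fun x => \sum_(j < N) \sum_(j' < N) Z j x * Z j' x)); last first.
    by move=> x; rewrite expr2 mulr_suml; apply: eq_bigr => j _; rewrite mulr_sumr.
  rewrite Emu_sum; apply: eq_bigr => j _; rewrite Emu_sum (bigD1 j) //= big1 ?addr0.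
    by apply: Emu_ext => x; rewrite expr2.
  by move=> j' hj'; apply: Eoff; rewrite eq_sym.
have EY1 : Emu cu (fun x => (\sum_(j < N) Z j x) ^+ 2) <= 1.
  apply: (@le_trans _ _ (Emu cu (fun _ => 1))); last by rewrite Emu_const //; apply: cu_sum.
  apply: Emu_le; first exact: cu_ge0.
  move=> x.
  pose s0 := foldl (fun v i => robp_trans B i v (x i)) (robp_start B) p.
  have -> : \sum_(j < N) Z j x = Mt i (x i) s0 u - Mbar i s0 u.
    rewrite /Z exchange_big /=.
    transitivity (\sum_c Pind p x c * Dl i (x i) c u).
      by apply: eq_bigr => c _; rewrite -mulr_suml (W_sumP _ _ hN).
    by rewrite /Pind sum_ind1.
  have := Mt_ge0 i (x i) s0 u; have := Mt_le1 i (x i) s0 u.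
  have := Mbar_ge0 i s0 u; have := Mbar_le1 i s0 u.
  move=> *; nra.
have ge0 : forall j, 0 <= Emu cu (fun x => Z j x ^+ 2).
  move=> j; apply: sumr_ge0 => x _; apply: mulr_ge0; last exact: sqr_ge0.
  by apply: prodr_ge0 => l _; apply: cu_ge0.
apply: le_trans EY1; rewrite EY (bigD1 (Ordinal hmN)) //=.
by rewrite lerDl sumr_ge0 // => j _; apply: ge0.
Qed.

Variable eta : R.
Hypothesis eta0 : 0 <= eta.
Hypothesis eta1 : eta <= 1.

Definition Nz i a c u : R := (1 - eta) * Mt i a c u + eta * Mbar i c u.
Lemma Nz_split i a c u : Nz i a c u = Mbar i c u + (1 - eta) * Dl i a c u.
Proof. rewrite /Nz /Dl; ring. Qed.
Lemma Nz_ge0 i a c u : 0 <= Nz i a c u.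
Proof.
by rewrite /Nz addr_ge0 // mulr_ge0 ?subr_ge0 ?Mt_ge0 ?Mbar_ge0.
Qed.
Lemma Nz_sum i a c : \sum_u Nz i a c u = 1.
Proof.
rewrite /Nz big_split /= -mulr_sumr -[X in _ + X]mulr_sumr Mt_sum Mbar_sum; ring.
Qed.

Definition Sv s (x : word) := SgenB (fun i => Nz i (x i)) acc s.
Lemma Sv_range s x c : 0 <= Sv s x c <= 1.
Proof.
apply: SgenB_range; [move=> *; apply: Nz_ge0 | move=> *; apply: Nz_sum | exact: acc_range].
Qed.

Definition cx (x : word) : 'I_n -> 'I_q -> R :=
  fun i b => (1 - eta) * (b == x i)%:R + eta / q%:R.

Lemma cx_sum x i : \sum_b cx x i b = 1.
Proof.
rewrite /cx big_split /= -mulr_sumr.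
have -> : \sum_b ((b == x i)%:R : R) = 1.
  by rewrite -[RHS](@sum_ind1' R _ (x i)); apply: eq_bigr => b _; rewrite eq_sym.
rewrite sumr_const card_ord -mulr_natr.
by field; rewrite qR_neq0.
Qed.

Lemma noise_Sv x : noise_op eta (robp_fun R B) x = Sv (enum 'I_n) x (robp_start B).
Proof.
have -> : noise_op eta (robp_fun R B) x = Emu (cx x) (fun y => Fl (enum 'I_n) y (robp_start B)) by [].
rewrite Emu_Fl ?enum_uniq //; last exact: cx_sum.
apply: SgenB_ext => i c u.
rewrite /cx /Nz /Mbar.
under eq_bigr => b _ do rewrite mulrDl.
rewrite big_split /=; congr (_ + _).
  have := sum_ind1 (x i) (fun b => (1 - eta) * Mt i b c u); move=> /= <-.
  by apply: eq_bigr => b _; rewrite eq_sym; ring.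
by rewrite -mulr_sumr mulrA.
Qed.

Lemma EUf : (q%:R ^+ n)^-1 * \sum_(x : word) robp_fun R B x = SgenB Mbar acc (enum 'I_n) (robp_start B).
Proof.
rewrite -EU_eq.
have -> : Emu cu (robp_fun R B) = Emu cu (fun y => Fl (enum 'I_n) y (robp_start B)) by [].
rewrite Emu_Fl ?enum_uniq //; last exact: cu_sum.
apply: SgenB_ext => i c u; by rewrite /Mbar /cu mulr_sumr.
Qed.

Lemma assoc_bar p (v T : 'I_w -> R) :
  \sum_u foldl (fun v i u => \sum_c v c * Mbar i c u) v p u * T u = \sum_u v u * SgenB Mbar T p u.
Proof.
elim: p v => [|i p IH] v //=.
rewrite IH.
transitivity (\sum_u \sum_c v c * Mbar i c u * SgenB Mbar T p u).
  by apply: eq_bigr => u _; rewrite mulr_suml.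
rewrite exchange_big /=; apply: eq_bigr => c _; rewrite mulr_sumr; apply: eq_bigr => u _; ring.
Qed.

Variable kk : nat.

Definition Lv p x u := \sum_(m < kk.+1) (1 - eta) ^+ m * W p x m u.
Definition X p i (x : word) u := \sum_c W p x kk c * Dl i (x i) c u.
Definition Hterm p i s x := (1 - eta) ^+ kk.+1 * \sum_u X p i x u * Sv s x u.
Fixpoint Hs p s x := match s with
  | [::] => 0
  | i :: s' => Hterm p i s' x + Hs (rcons p i) s' x end.

Lemma shift_sum (r : R) (T : nat -> R) k :
  r * \sum_(m < k.+1) r ^+ m * T m =
  \sum_(m < k.+1) r ^+ m * (if (m : nat) is m'.+1 then T m' else 0) + r ^+ k.+1 * T k.
Proof.
rewrite big_ord_recr big_ord_recl /= mulr0 add0r mulrDr mulr_sumr; congr (_ + _).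
  by apply: eq_bigr => m _; rewrite /bump add0n leq0n add1n exprS mulrA.
by rewrite exprS mulrA.
Qed.

Lemma vec_key p i x u :
  \sum_c Lv p x c * Nz i (x i) c u = Lv (rcons p i) x u + (1 - eta) ^+ kk.+1 * X p i x u.
Proof.
pose A m := \sum_c W p x m c * Mbar i c u.
pose T m := \sum_c W p x m c * Dl i (x i) c u.
have e1 : \sum_c Lv p x c * Nz i (x i) c u =
    \sum_(m < kk.+1) (1 - eta) ^+ m * A m + (1 - eta) * \sum_(m < kk.+1) (1 - eta) ^+ m * T m.
  transitivity (\sum_c \sum_(m < kk.+1) ((1 - eta) ^+ m * (W p x m c * Mbar i c u) +
      (1 - eta) * ((1 - eta) ^+ m * (W p x m c * Dl i (x i) c u)))).
    apply: eq_bigr => c _; rewrite /Lv mulr_suml; apply: eq_bigr => m _.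
    rewrite Nz_split; ring.
  rewrite exchange_big /=.
  transitivity (\sum_(m < kk.+1) ((1 - eta) ^+ m * A m + (1 - eta) * ((1 - eta) ^+ m * T m))).
    by apply: eq_bigr => m _; rewrite big_split /= /A /T -!mulr_sumr.
  by rewrite big_split /= mulr_sumr.
have e2 : Lv (rcons p i) x u =
    \sum_(m < kk.+1) (1 - eta) ^+ m * A m +
    \sum_(m < kk.+1) (1 - eta) ^+ m * (if (m : nat) is m'.+1 then T m' else 0).
  rewrite /Lv -big_split /=; apply: eq_bigr => m _.
  rewrite W_rcons mulrDr; congr (_ + _ * _).
  case: (nat_of_ord m) => [|m'] /=; last by [].
  by rewrite big1 // => c _; rewrite mul0r.
by rewrite e1 e2 shift_sum addrA.
Qed.

Lemma tele s p x :
  \sum_u Lv p x u * Sv s x u = \sum_u Lv (p ++ s) x u * acc u + Hs p s x.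
Proof.
elim: s p => [|i s IH] p /=; first by rewrite cats0 addr0.
transitivity (\sum_u (\sum_c Lv p x c * Nz i (x i) c u) * Sv s x u).
  transitivity (\sum_c \sum_u Lv p x c * Nz i (x i) c u * Sv s x u).
    apply: eq_bigr => c _; rewrite /Sv /= mulr_sumr; apply: eq_bigr => u _; ring.
  rewrite exchange_big /=; apply: eq_bigr => u _; by rewrite mulr_suml.
transitivity (\sum_u (Lv (rcons p i) x u * Sv s x u + (1 - eta) ^+ kk.+1 * X p i x u * Sv s x u)).
  by apply: eq_bigr => u _; rewrite vec_key mulrDl.
rewrite big_split /= IH cat_rcons /Hterm mulr_sumr.
have -> : \sum_u (1 - eta) ^+ kk.+1 * X p i x u * Sv s x u =
          \sum_u (1 - eta) ^+ kk.+1 * (X p i x u * Sv s x u).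
  by apply: eq_bigr => u _; rewrite mulrA.
rewrite -!addrA; congr (_ + _); exact: addrC.
Qed.

Variable D : word -> R.
Hypothesis htw : twise_uniform (2 * kk.+1) D.
Hypothesis hD : is_distribution D.

Lemma absX (y : R) : `|y| <= (1 + y ^+ 2) / 2.
Proof.
have h := real_normK (num_real y).
have := sqr_ge0 (`|y| - 1); rewrite sqrrB1 h mulr2n.
move: (y ^+ 2) (`|y|) => a b hab; lra.
Qed.

Lemma Hterm_bound p i s : uniq p -> i \notin p ->
  `|\sum_(x : word) D x * Hterm p i s x| <= (1 - eta) ^+ kk.+1 * w%:R.
Proof.
move=> hu hi.
have [D0 D1] := hD.
set c := (1 - eta) ^+ kk.+1.
have c0 : 0 <= c by rewrite /c exprn_ge0 // subr_ge0.
have hXl : forall u, lowdeg kk.+1 (fun x => X p i x u).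
  move=> u; apply: ld_sumseq => c'; rewrite -addn1; apply: ld_mul; [exact: ld_W | exact: ld_Dl].
have hX : forall u, \sum_(x : word) D x * X p i x u ^+ 2 <= 1.
  move=> u; rewrite (ld_E htw hD); last first.
    apply: (@LD_ext _ (fun x => X p i x u * X p i x u)); last by move=> x; rewrite expr2.
    by apply: ld_mono (ld_mul (hXl u) (hXl u)); rewrite mul2n -addnn.
  rewrite -EU_eq; exact: E2.
have habs : forall x, `|Hterm p i s x| <= c * \sum_u (1 + X p i x u ^+ 2) / 2.
  move=> x; rewrite /Hterm normrM -/c ger0_norm // ler_wpM2l //.
  apply: le_trans (ler_norm_sum _ _ _) _; apply: ler_sum => u _.
  rewrite normrM; have /andP [s0 s1] := Sv_range s x u.
  apply: le_trans (absX (X p i x u)); rewrite [`|Sv _ _ _|]ger0_norm //.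
  by rewrite -{2}(mulr1 `|X p i x u|) ler_wpM2l.
apply: le_trans (ler_norm_sum _ _ _) _.
apply: (@le_trans _ _ (\sum_(x : word) D x * (c * \sum_u (1 + X p i x u ^+ 2) / 2))).
  apply: ler_sum => x _; rewrite normrM ger0_norm //; apply: ler_wpM2l => //; exact: habs.
have -> : \sum_(x : word) D x * (c * \sum_u (1 + X p i x u ^+ 2) / 2) =
          c * \sum_u (1 + \sum_(x : word) D x * X p i x u ^+ 2) / 2.
  transitivity (c * \sum_u \sum_(x : word) D x * ((1 + X p i x u ^+ 2) / 2)).
    rewrite exchange_big /= mulr_sumr; apply: eq_bigr => x _.
    by rewrite mulrCA mulr_sumr.
  congr (_ * _); apply: eq_bigr => u _.
  transitivity (\sum_(x : word) (D x / 2 + D x * X p i x u ^+ 2 / 2)).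
    by apply: eq_bigr => x _; ring.
  by rewrite big_split /= -!mulr_suml D1; ring.
rewrite ler_wpM2l // -[w in _ <= w%:R]card_ord -sumr_const.
apply: ler_sum => u _; have := hX u; lra.
Qed.

Lemma Hs_bound s p : uniq (p ++ s) ->
  `|\sum_(x : word) D x * Hs p s x| <= (size s)%:R * ((1 - eta) ^+ kk.+1 * w%:R).
Proof.
elim: s p => [|i s IH] p hu /=.
  by rewrite big1 ?normr0 ?mul0r // => x _; rewrite mulr0.
have hu' : uniq (rcons p i ++ s) by rewrite cat_rcons.
move: (hu); rewrite cat_uniq => /and3P [hp hhas _].
have hi : i \notin p.
  by apply: contra hhas => hi; apply/hasP; exists i => //; rewrite mem_head.
rewrite (eq_bigr (fun x => D x * Hterm p i s x + D x * Hs (rcons p i) s x)); last first.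
  by move=> x _; rewrite mulrDr.
rewrite big_split /=.
apply: le_trans (ler_normD _ _) _.
rewrite -natr1 mulrDl mul1r [X in _ <= X]addrC.
by apply: lerD; [exact: Hterm_bound hp hi | exact: IH].
Qed.

Lemma main_k :
  `| \sum_(x : word) D x * noise_op eta (robp_fun R B) x
       - (q%:R ^+ n)^-1 * \sum_(x : word) robp_fun R B x |
    <= n%:R * w%:R * (1 - eta) ^+ kk.+1.
Proof.
set e := enum 'I_n.
have hT : forall x, noise_op eta (robp_fun R B) x = \sum_u Lv e x u * acc u + Hs [::] e x.
  move=> x; rewrite noise_Sv; have := tele e [::] x; rewrite /= => <-.
  have hL0 : forall u, Lv [::] x u = e0 u.
    move=> u; rewrite /Lv big_ord_recl /= big1 ?addr0.
      by rewrite /W /= /st0 expr0 !mul1r.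
    by move=> m _; rewrite /W /= /st0 mul0r mulr0.
  rewrite (eq_bigr (fun u => e0 u * Sv e x u)); last by move=> u _; rewrite hL0.
  by rewrite /e0 sum_ind1.
have hL : \sum_(x : word) D x * (\sum_u Lv e x u * acc u) = SgenB Mbar acc e (robp_start B).
  transitivity (\sum_u acc u * \sum_(m < kk.+1) (1 - eta) ^+ m * \sum_(x : word) D x * W e x m u).
    transitivity (\sum_(x : word) \sum_u \sum_(m < kk.+1) acc u * ((1 - eta) ^+ m * (D x * W e x m u))).
      apply: eq_bigr => x _; rewrite mulr_sumr; apply: eq_bigr => u _.
      rewrite /Lv mulr_suml mulr_sumr; apply: eq_bigr => m _; ring.
    rewrite exchange_big /=; apply: eq_bigr => u _.
    rewrite exchange_big /= mulr_sumr; apply: eq_bigr => m _.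
    by rewrite -mulr_sumr -mulr_sumr.
  have hEm : forall (m : 'I_kk.+1) u, \sum_(x : word) D x * W e x m u = Emu cu (fun x => W e x m u).
    move=> m u; rewrite (ld_E htw hD) ?EU_eq //; apply: ld_mono (ld_W e m u).
    rewrite mul2n -addnn; exact: leq_trans (ltnW (ltn_ord m)) (leq_addr _ _).
  rewrite (eq_bigr (fun u => acc u * Wbar e u)); last first.
    move=> u _; congr (_ * _).
    rewrite (eq_bigr (fun m : 'I_kk.+1 => (1 - eta) ^+ m * Emu cu (fun x => W e x m u))); last first.
      by move=> m _; rewrite hEm.
    rewrite big_ord_recl /= big1 ?addr0.
      rewrite expr0 mul1r (@Emu_ext cu _ (fun _ => Wbar e u)) ?Emu_const //.
        exact: cu_sum.
      by move=> x; rewrite W0.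
    by move=> m _; rewrite W_mean0 ?mulr0 // enum_uniq.
  have := assoc_bar e e0 acc; rewrite -/(Wbar e) => h.
  rewrite (eq_bigr (fun u => Wbar e u * acc u)); last by move=> u _; rewrite mulrC.
  by rewrite h /e0 sum_ind1.
rewrite (eq_bigr (fun x => D x * (\sum_u Lv e x u * acc u) + D x * Hs [::] e x)); last first.
  by move=> x _; rewrite hT mulrDr.
rewrite big_split /= hL EUf -/e addrAC subrr add0r.
have hb : `|\sum_(x : word) D x * Hs [::] e x| <= (size e)%:R * ((1 - eta) ^+ kk.+1 * w%:R).
  by apply: Hs_bound; rewrite enum_uniq.
apply: le_trans hb _.
rewrite size_enum_ord.
have -> : n%:R * w%:R * (1 - eta) ^+ kk.+1 = n%:R * ((1 - eta) ^+ kk.+1 * w%:R) by ring.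
exact: lexx.
Qed.

End Main.

Unset Implicit Arguments.
Set Strict Implicit.

Theorem theorem4p2 (R : realFieldType) (q n k w : nat) (D : word n q -> R) (eta : R) :
  (1 < q)%N ->
  is_distribution D ->
  twise_uniform (2 * k) D ->
  0 <= eta <= 1 ->
  forall B : ROBP n w q,
    `| \sum_(x : word n q) D x * noise_op eta (robp_fun R B) x
       - (q%:R ^+ n)^-1 * \sum_(x : word n q) robp_fun R B x |
    <= n%:R * w%:R * (1 - eta) ^+ k.
Proof.
move=> hq hD htw /andP [e0 e1] B.
have q0 : (0 < q)%N by apply: ltnW.
case: k htw => [|kk] htw; last exact: (main_k B q0 e0 e1 htw hD).
case: n D B hD htw => [|n] D B hD htw.
  have htw2 : twise_uniform (2 * 1) D.
    move=> S a _.
    have -> : #|S| = 0%N by apply/eqP; rewrite -leqn0; apply: leq_trans (max_card _) _; rewrite card_ord.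
    rewrite expr0 invr1 -hD.2; apply: eq_bigl => x.
    by apply/forall_inP => -[i hi].
  have := main_k B q0 e0 e1 htw2 hD.
  by rewrite !mul0r.
have w0 : (0 < w)%N by apply: leq_ltn_trans (ltn_ord (robp_start B)).
have [D0 D1] := hD.
have ha : 0 <= \sum_(x : word n.+1 q) D x * noise_op eta (robp_fun R B) x <= 1.
  apply/andP; split.
    apply: sumr_ge0 => x _; rewrite noise_Sv //; apply: mulr_ge0 => //.
    by case/andP: (Sv_range B q0 e0 e1 (enum 'I_n.+1) x (robp_start B)).
  rewrite -D1; apply: ler_sum => x _; rewrite noise_Sv //.
  rewrite -{2}(mulr1 (D x)); apply: ler_wpM2l => //.
  by case/andP: (Sv_range B q0 e0 e1 (enum 'I_n.+1) x (robp_start B)).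
have hb := EUf R B q0.
have hb' : 0 <= SgenB (Mbar R B) (acc R B) (enum 'I_n.+1) (robp_start B) <= 1.
  apply: SgenB_range; [exact: Mbar_ge0 | exact: Mbar_sum | exact: acc_range].
rewrite hb expr0 mulr1.
apply: (@le_trans _ _ 1).
  move: ha hb'; set a := \sum_(x : _) _; set b := SgenB _ _ _ _.
  move=> /andP [a0 a1] /andP [b0 b1]; rewrite ler_norml; apply/andP; split; lra.
by rewrite -natrM ler1n muln_gt0 w0.
Qed.
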